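(* Let $(\mathfrak{g},[\cdot,\cdot]_{\mathfrak{g}},\phi_{\mathfrak{g}})$ and $(\mathfrak g^*,[\cdot,\cdot]_{\mathfrak g^*},\phi_{\mathfrak g^*})$ be two weakly involutive Hom-Lie algebras ($\mathfrak g$ finite-dimensional, $\mathfrak g^*$ its dual space, $\phi_{\mathfrak g^*}$ an arbitrary linear map). Then $(\mathfrak g\oplus\mathfrak g^*;\mathfrak g,\mathfrak g^* )$ is a Manin triple of Hom-Lie algebras associated to the nondegenerate symmetric bilinear form $\mathfrak B(x+a,y+b)=\langle x,b\rangle+\langle y,a\rangle$ (i.e. there is a Hom-Lie algebra structure on $\mathfrak g\oplus\mathfrak g^*$ having $\mathfrak g$ and $\mathfrak g^*$ as Hom-Lie subalgebras with their given structures and for which $\mathfrak B$ is invariant) if and only if $\phi_{\mathfrak g^*}=\phi_{\mathfrak g}^*$ and $(\mathfrak g,\mathfrak g^*;\mathrm{ad}^\circ,\mathfrak{ad}^\circ)$ is a matched pair of Hom-Lie algebras.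
   Context: A Hom-Lie algebra $(\mathfrak{h},[\cdot,\cdot]_{\mathfrak{h}},\phi_{\mathfrak{h}})$: skew-symmetric bilinear bracket and linear map with $\phi_{\mathfrak h}[x,y]=[\phi_{\mathfrak h}x,\phi_{\mathfrak h}y]$ and $[\phi_{\mathfrak h}(x),[y,z]]+[\phi_{\mathfrak h}(y),[z,x]]+[\phi_{\mathfrak h}(z),[x,y]]=0$; weakly involutive if $[\phi_{\mathfrak h}^2(x),y]=[x,y]$. A representation $(V,\beta,\rho)$: $\beta\in\mathfrak{gl}(V)$, $\rho:\mathfrak h\to\mathfrak{gl}(V)$ with $\rho(\phi_{\mathfrak h}(x))\beta=\beta\rho(x)$ and $\rho([x,y])\beta=\rho(\phi_{\mathfrak h}(x))\rho(y)-\rho(\phi_{\mathfrak h}(y))\rho(x)$. $\mathrm{ad}^\circ:\mathfrak g\to\mathfrak{gl}(\mathfrak g^* )$, $\langle\mathrm{ad}^\circ_xa,y\rangle=-\langle a,[\phi_{\mathfrak g}(x),y]_{\mathfrak g}\rangle$; $\mathfrak{ad}^\circ:\mathfrak g^*\to\mathfrak{gl}(\mathfrak g)$, $\langle\mathfrak{ad}^\circ_ax,b\rangle=-\langle x,[\phi_{\mathfrak g^*}(a),b]_{\mathfrak g^*}\rangle$. A bilinear form $\mathfrak B$ on a Hom-Lie algebra $(\mathfrak k,[\cdot,\cdot]_{\mathfrak k},\phi_{\mathfrak k})$ is invariant if $\mathfrak B([x,y]_{\mathfrak k},z)=\mathfrak B(x,[\phi_{\mathfrak k}(y),z]_{\mathfrak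 k})$ and $\mathfrak B(\phi_{\mathfrak k}(x),y)=\mathfrak B(x,\phi_{\mathfrak k}(y))$. A Manin triple $(\mathfrak k;\mathfrak g,\mathfrak g')$: a Hom-Lie algebra $\mathfrak k$ with a nondegenerate symmetric invariant bilinear form such that $\mathfrak g,\mathfrak g'$ are isotropic Hom-Lie subalgebras and $\mathfrak k=\mathfrak g\oplus\mathfrak g'$ as vector spaces. A matched pair $(\mathfrak g,\mathfrak g';\rho,\rho')$: Hom-Lie algebras $\mathfrak g,\mathfrak g'$, representations $(\mathfrak g',\phi_{\mathfrak g'},\rho)$ of $\mathfrak g$ and $(\mathfrak g,\phi_{\mathfrak g},\rho')$ of $\mathfrak g'$ with, for all $x,y\in\mathfrak g$, $x',y'\in\mathfrak g'$: $\rho'(\phi_{\mathfrak g'}(x'))[x,y]_{\mathfrak g}=[\rho'(x')x,\phi_{\mathfrak g}(y)]_{\mathfrak g}+[\phi_{\mathfrak g}(x),\rho'(x')y]_{\mathfrak g}+\rho'(\rho(y)x')\phi_{\mathfrak g}(x)-\rho'(\rho(x)x')\phi_{\mathfrak g}(y)$ and $\rho(\phi_{\mathfrak g}(x))[x',y']_{\mathfrak g'}=[\rho(x)x',\phi_{\mathfrak g'}(y')]_{\mathfrak g'}+[\phi_{\mathfrak g'}(x'),\rho(x)y']_{\mathfrak g'}+\rho(\rho'(y')x)\phi_{\mathfrak g'}(x')-\rho(\rho'(x')x)\phi_{\mathfrak g'}(y')$. *)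

(* Defs.v *)
From HB Require Import structures.
From mathcomp Require Import all_boot all_order all_algebra.
Set Implicit Arguments. Unset Strict Implicit. Unset Printing Implicit Defensive.
Import Order.TTheory GRing.Theory Num.Theory.
Local Open Scope ring_scope.

Section HomLie.
Variable K : fieldType.

Definition lin (U V : lmodType K) (f : U -> V) : Prop :=
  forall (c : K) (u v : U), f (c *: u + v) = c *: f u + f v.

Definition is_HomLie (V : lmodType K) (br : V -> V -> V) (phi : V -> V) : Prop :=
  ((forall y, lin (fun x => br x y)) /\
      (forall x, lin (br x)) /\
      (forall x y, br x y = - br y x) /\
      lin phi /\
      (forall x y, phi (br x y) = br (phi x) (phi y)) /\
      (forall x y z, br (phi x) (br y z) + br (phi y) (br z x)
                       + br (phi z) (br x y) = 0)).

Definition weakly_involutive (V : lmodType K) (br : V -> V -> V) (phi : V -> V) :=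
  forall x y, br (phi (phi x)) y = br x y.

Definition is_rep (H W : lmodType K) (br : H -> H -> H) (phi : H -> H)
    (beta : W -> W) (rho : H -> W -> W) : Prop :=
  (lin beta /\
      (forall x, lin (rho x)) /\
      (forall (c : K) x y w, rho (c *: x + y) w = c *: rho x w + rho y w) /\
      (forall x w, rho (phi x) (beta w) = beta (rho x w)) /\
      (forall x y w, rho (br x y) (beta w)
                     = rho (phi x) (rho y w) - rho (phi y) (rho x w))).

Definition matched_pair (G G' : lmodType K)
    (brg : G -> G -> G) (phig : G -> G) (brg' : G' -> G' -> G') (phig' : G' -> G')
    (rho : G -> G' -> G') (rho' : G' -> G -> G) : Prop :=
  (is_HomLie brg phig /\ is_HomLie brg' phig' /\
      is_rep brg phig phig' rho /\ is_rep brg' phig' phig rho' /\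
      (forall x y x', rho' (phig' x') (brg x y)
          = brg (rho' x' x) (phig y) + brg (phig x) (rho' x' y)
            + rho' (rho y x') (phig x) - rho' (rho x x') (phig y)) /\
      (forall x x' y', rho (phig x) (brg' x' y')
          = brg' (rho x x') (phig' y') + brg' (phig' x') (rho x y')
            + rho (rho' y' x) (phig' x') - rho (rho' x' x) (phig' y'))).

Definition invariant_form (W : lmodType K) (br : W -> W -> W) (phi : W -> W)
    (B : W -> W -> K) : Prop :=
  (forall x y z, B (br x y) z = B x (br (phi y) z)) /\
  (forall x y, B (phi x) y = B x (phi y)).

End HomLie.

(* The finite-dimensional space g is modelled as K^n = 'rV[K]_n, and its dual
   space g^* as 'rV[K]_n with the canonical pairing <x, a> = sum_i x_i a_i. *)
Section Dual.
Variables (K : fieldType) (n : nat).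
Local Notation V := 'rV[K]_n.

Definition pair (x a : V) : K := \sum_(i < n) x 0 i * a 0 i.

(* ad°_x a : <ad°_x a, y> = - <a, [phi_g x, y]_g>  (coordinates w.r.t. the
   standard basis) *)
Definition ad_circ (brg : V -> V -> V) (phig : V -> V) (x : V) (a : V) : V :=
  \row_j (- pair (brg (phig x) (delta_mx 0 j)) a).

(* frak-ad°_a x : <frak-ad°_a x, b> = - <x, [phi_g* a, b]_g*> *)
Definition frak_ad_circ (brs : V -> V -> V) (phis : V -> V) (a : V) (x : V) : V :=
  \row_j (- pair x (brs (phis a) (delta_mx 0 j))).

Definition Bform (u v : V * V) : K := pair u.1 v.2 + pair v.1 u.2.

Definition manin_triple_double (brg : V -> V -> V) (phig : V -> V)
    (brs : V -> V -> V) (phis : V -> V) : Prop :=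
  ((forall u v, Bform u v = Bform v u) /\
      (forall u, (forall v, Bform u v = 0) -> u = 0) /\
      (forall x y : V, Bform (x, 0) (y, 0) = 0) /\
      (forall a b : V, Bform (0, a) (0, b) = 0)/\
      exists (brk : V * V -> V * V -> V * V) (phik : V * V -> V * V),
        (is_HomLie brk phik /\
            (forall x y, brk (x, 0) (y, 0) = (brg x y, 0)) /\
            (forall x, phik (x, 0) = (phig x, 0)) /\
            (forall a b, brk (0, a) (0, b) = (0, brs a b)) /\
            (forall a, phik (0, a) = (0, phis a)) /\
            invariant_form brk phik Bform)).
End Dual.

(* Main.v *)
Require Import Defs.
From HB Require Import structures.
From mathcomp Require Import all_boot all_order all_algebra.
From mathcomp Require Import ring.
Import GRing.Theory.
Local Open Scope ring_scope.
Set Implicit Arguments. Unset Strict Implicit. Unset Printing Implicit Defensive.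

Section LinGen.
Variable K : fieldType.
Variables (U W : lmodType K) (f : U -> W).
Hypothesis Hf : lin f.
Lemma lin0 : f 0 = 0.
Proof. have h := Hf 1 0 0; rewrite !scale1r !addr0 in h.
by apply: (addrI (f 0)); rewrite addr0 -h. Qed.
Lemma linD u v : f (u + v) = f u + f v.
Proof. by have := Hf 1 u v; rewrite !scale1r. Qed.
Lemma linZ c u : f (c *: u) = c *: f u.
Proof. by have := Hf c u 0; rewrite !addr0 lin0 addr0. Qed.
Lemma linN u : f (- u) = - f u.
Proof. by rewrite -scaleN1r linZ scaleN1r. Qed.
End LinGen.

Lemma comb1 (K : fieldType) (a b c d k : K) : c = d -> a - b = k * (c - d) -> a = b.
Proof. move=> -> h; apply/eqP; by rewrite -subr_eq0 h subrr mulr0. Qed.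
Lemma comb2 (K : fieldType) (a b c d c' d' k k' : K) : c = d -> c' = d' ->
  a - b = k * (c - d) + k' * (c' - d') -> a = b.
Proof. move=> -> -> h; apply/eqP; by rewrite -subr_eq0 h !subrr !mulr0 addr0. Qed.

Section PairL.
Variables (K : fieldType) (n : nat).
Local Notation V := 'rV[K]_n.
Lemma pairC (x a : V) : pair x a = pair a x.
Proof. by apply: eq_bigr => i _; rewrite mulrC. Qed.
Lemma pairDl (x y a : V) : pair (x + y) a = pair x a + pair y a.
Proof. rewrite /pair -big_split; apply: eq_bigr => i _; by rewrite !mxE /= mulrDl. Qed.
Lemma pairZl c (x a : V) : pair (c *: x) a = c * pair x a.
Proof. rewrite /pair mulr_sumr; apply: eq_bigr => i _; by rewrite !mxE mulrA. Qed.
Lemma pairNl (x a : V) : pair (- x) a = - pair x a.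
Proof. by rewrite -scaleN1r pairZl mulN1r. Qed.
Lemma pair0l (a : V) : pair 0 a = 0.
Proof. rewrite /pair big1 // => i _; by rewrite mxE mul0r. Qed.
Lemma pairDr (x a b : V) : pair x (a + b) = pair x a + pair x b.
Proof. by rewrite !(pairC x) pairDl. Qed.
Lemma pairZr c (x a : V) : pair x (c *: a) = c * pair x a.
Proof. by rewrite !(pairC x) pairZl. Qed.
Lemma pairNr (x a : V) : pair x (- a) = - pair x a.
Proof. by rewrite !(pairC x) pairNl. Qed.
Lemma pair0r (a : V) : pair a 0 = 0.
Proof. by rewrite pairC pair0l. Qed.
Lemma pair_delta j (a : V) : pair (delta_mx 0 j) a = a 0 j.
Proof.
rewrite /pair (bigD1 j) //= big1 ?addr0; first by rewrite mxE !eqxx mul1r.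
by move=> i /negPf ne; rewrite mxE ne andbF mul0r.
Qed.
Lemma pair_extr (a b : V) : (forall y, pair y a = pair y b) -> a = b.
Proof. by move=> h; apply/rowP => j; rewrite -!pair_delta. Qed.
Lemma pair_extl (a b : V) : (forall y, pair a y = pair b y) -> a = b.
Proof. by move=> h; apply: pair_extr => y; rewrite !(pairC y). Qed.

Lemma key_lin (f : V -> K) : (forall c u v, f (c *: u + v) = c * f u + f v) ->
  forall x, pair x (\row_j f (delta_mx 0 j)) = f x.
Proof.
move=> hf x.
have f0 : f 0 = 0.
  have h := hf 1 0 0; rewrite !scale1r !addr0 mul1r in h.
  by apply: (addrI (f 0)); rewrite addr0 -h.
have fD : {morph f : u v / u + v >-> u + v}.
  by move=> u v; have := hf 1 u v; rewrite scale1r mul1r.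
rewrite {2}(row_sum_delta x) (big_morph f fD f0) /pair.
apply: eq_bigr => j _; rewrite mxE; have := hf (x 0 j) (delta_mx 0 j) 0.
by rewrite addr0 f0 addr0 => ->.
Qed.
End PairL.

Definition JJ (W : zmodType) (br : W -> W -> W) (phi : W -> W) (u v w : W) : W :=
  br (phi u) (br v w) + br (phi v) (br w u) + br (phi w) (br u v).

Lemma prodD (K : fieldType) n (a b c d : 'rV[K]_n) : (a, b) + (c, d) = (a + c, b + d). Proof. by []. Qed.
Lemma prodN (K : fieldType) n (a b : 'rV[K]_n) : - (a, b) = (- a, - b). Proof. by []. Qed.
Lemma prodZ (K : fieldType) n (a b : 'rV[K]_n) c : c *: (a, b) = (c *: a, c *: b). Proof. by []. Qed.
Lemma prod0 (K : fieldType) n : (0 : 'rV[K]_n * 'rV[K]_n) = (0, 0). Proof. by []. Qed.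

Section JGen.
Variables (K : fieldType) (W : lmodType K) (br : W -> W -> W) (phi : W -> W).
Hypothesis H1 : forall y, lin (fun x => br x y).
Hypothesis H2 : forall x, lin (br x).
Hypothesis H3 : lin phi.
Lemma acl (a1 a2 b1 b2 c1 c2 : W) : (a1 + a2) + (b1 + b2) + (c1 + c2) = (a1 + b1 + c1) + (a2 + b2 + c2).
Proof. by rewrite (addrACA a1 a2 b1 b2) (addrACA (a1 + b1) (a2 + b2) c1 c2). Qed.
Lemma JJcyc u v w : JJ br phi u v w = JJ br phi v w u.
Proof. by rewrite /JJ [RHS]addrC addrA. Qed.
Lemma JJD1 u1 u2 v w : JJ br phi (u1 + u2) v w = JJ br phi u1 v w + JJ br phi u2 v w.
Proof.
have a1 : forall x y z, br (x + y) z = br x z + br y z by move=> x y z; exact (linD (H1 z) x y).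
have a2 : forall x y z, br z (x + y) = br z x + br z y by move=> x y z; exact (linD (H2 z) x y).
rewrite /JJ (linD H3) !a1 !a2.
exact: acl.
Qed.
Lemma JJD2 u v1 v2 w : JJ br phi u (v1 + v2) w = JJ br phi u v1 w + JJ br phi u v2 w.
Proof. by rewrite (JJcyc u) JJD1 (JJcyc u v1) (JJcyc u v2). Qed.
Lemma JJD3 u v w1 w2 : JJ br phi u v (w1 + w2) = JJ br phi u v w1 + JJ br phi u v w2.
Proof.
have c2 : forall u v w, JJ br phi u v w = JJ br phi w u v by move=> *; rewrite JJcyc JJcyc.
by rewrite (c2 u v (w1 + w2)) JJD1 -(c2 u v w1) -(c2 u v w2).
Qed.
End JGen.
Section Core.
Variables (K : fieldType) (n : nat).
Local Notation V := 'rV[K]_n.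
Variables (brg brs : V -> V -> V) (phig phis : V -> V) (rho rho' : V -> V -> V).
Hypothesis Hgl : forall y, lin (fun x => brg x y).
Hypothesis Hgr : forall x, lin (brg x).
Hypothesis Hsl : forall y, lin (fun x => brs x y).
Hypothesis Hsr : forall x, lin (brs x).
Hypothesis Hrl : forall a, lin (fun x => rho x a).
Hypothesis Hrr : forall x, lin (rho x).
Hypothesis Hql : forall x, lin (fun a => rho' a x).
Hypothesis Hqr : forall a, lin (rho' a).
Hypothesis Hpg : lin phig.
Hypothesis Hps : lin phis.
Hypothesis Hgsk : forall x y, brg x y = - brg y x.
Hypothesis Hssk : forall x y, brs x y = - brs y x.
Lemma gD1 x y z : brg (x + y) z = brg x z + brg y z. Proof. exact (linD (Hgl z) x y). Qed.
Lemma gD2 x y z : brg z (x + y) = brg z x + brg z y. Proof. exact (linD (Hgr z) x y). Qed.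
Lemma gN1 x z : brg (- x) z = - brg x z. Proof. exact (linN (Hgl z) x). Qed.
Lemma gN2 x z : brg z (- x) = - brg z x. Proof. exact (linN (Hgr z) x). Qed.
Lemma gZ1 c x z : brg (c *: x) z = c *: brg x z. Proof. exact (linZ (Hgl z) c x). Qed.
Lemma gZ2 c x z : brg z (c *: x) = c *: brg z x. Proof. exact (linZ (Hgr z) c x). Qed.
Lemma g01 z : brg 0 z = 0. Proof. exact (lin0 (Hgl z)). Qed.
Lemma g02 z : brg z 0 = 0. Proof. exact (lin0 (Hgr z)). Qed.
Lemma sD1 x y z : brs (x + y) z = brs x z + brs y z. Proof. exact (linD (Hsl z) x y). Qed.
Lemma sD2 x y z : brs z (x + y) = brs z x + brs z y. Proof. exact (linD (Hsr z) x y). Qed.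
Lemma sN1 x z : brs (- x) z = - brs x z. Proof. exact (linN (Hsl z) x). Qed.
Lemma sN2 x z : brs z (- x) = - brs z x. Proof. exact (linN (Hsr z) x). Qed.
Lemma sZ1 c x z : brs (c *: x) z = c *: brs x z. Proof. exact (linZ (Hsl z) c x). Qed.
Lemma sZ2 c x z : brs z (c *: x) = c *: brs z x. Proof. exact (linZ (Hsr z) c x). Qed.
Lemma s01 z : brs 0 z = 0. Proof. exact (lin0 (Hsl z)). Qed.
Lemma s02 z : brs z 0 = 0. Proof. exact (lin0 (Hsr z)). Qed.
Lemma rD1 x y z : rho (x + y) z = rho x z + rho y z. Proof. exact (linD (Hrl z) x y). Qed.
Lemma rD2 x y z : rho z (x + y) = rho z x + rho z y. Proof. exact (linD (Hrr z) x y). Qed.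
Lemma rN1 x z : rho (- x) z = - rho x z. Proof. exact (linN (Hrl z) x). Qed.
Lemma rN2 x z : rho z (- x) = - rho z x. Proof. exact (linN (Hrr z) x). Qed.
Lemma rZ1 c x z : rho (c *: x) z = c *: rho x z. Proof. exact (linZ (Hrl z) c x). Qed.
Lemma rZ2 c x z : rho z (c *: x) = c *: rho z x. Proof. exact (linZ (Hrr z) c x). Qed.
Lemma r01 z : rho 0 z = 0. Proof. exact (lin0 (Hrl z)). Qed.
Lemma r02 z : rho z 0 = 0. Proof. exact (lin0 (Hrr z)). Qed.
Lemma qD1 x y z : rho' (x + y) z = rho' x z + rho' y z. Proof. exact (linD (Hql z) x y). Qed.
Lemma qD2 x y z : rho' z (x + y) = rho' z x + rho' z y. Proof. exact (linD (Hqr z) x y). Qed.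
Lemma qN1 x z : rho' (- x) z = - rho' x z. Proof. exact (linN (Hql z) x). Qed.
Lemma qN2 x z : rho' z (- x) = - rho' z x. Proof. exact (linN (Hqr z) x). Qed.
Lemma qZ1 c x z : rho' (c *: x) z = c *: rho' x z. Proof. exact (linZ (Hql z) c x). Qed.
Lemma qZ2 c x z : rho' z (c *: x) = c *: rho' z x. Proof. exact (linZ (Hqr z) c x). Qed.
Lemma q01 z : rho' 0 z = 0. Proof. exact (lin0 (Hql z)). Qed.
Lemma q02 z : rho' z 0 = 0. Proof. exact (lin0 (Hqr z)). Qed.
Lemma pgD x y : phig (x + y) = phig x + phig y. Proof. exact (linD Hpg x y). Qed.
Lemma pgN x : phig (- x) = - phig x. Proof. exact (linN Hpg x). Qed.
Lemma pgZ c x : phig (c *: x) = c *: phig x. Proof. exact (linZ Hpg c x). Qed.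
Lemma pg0 : phig 0 = 0. Proof. exact (lin0 Hpg). Qed.
Lemma psD x y : phis (x + y) = phis x + phis y. Proof. exact (linD Hps x y). Qed.
Lemma psN x : phis (- x) = - phis x. Proof. exact (linN Hps x). Qed.
Lemma psZ c x : phis (c *: x) = c *: phis x. Proof. exact (linZ Hps c x). Qed.
Lemma ps0 : phis 0 = 0. Proof. exact (lin0 Hps). Qed.
Definition BR (u v : V * V) : V * V :=
  (brg u.1 v.1 - rho' v.2 u.1 + rho' u.2 v.1, brs u.2 v.2 + rho u.1 v.2 - rho v.1 u.2).
Definition PH (u : V * V) : V * V := (phig u.1, phis u.2).

Ltac simpl_all := rewrite ?(gD1,gD2,gN1,gN2,g01,g02,sD1,sD2,sN1,sN2,s01,s02,rD1,rD2,rN1,rN2,r01,r02,qD1,qD2,qN1,qN2,q01,q02,pgD,pgN,pg0,psD,psN,ps0,gZ1,gZ2,sZ1,sZ2,rZ1,rZ2,qZ1,qZ2,pgZ,psZ,subr0,addr0,add0r,sub0r,oppr0).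
Ltac pw := apply/rowP => j; rewrite !mxE; ring.
Ltac fin := rewrite ?prodD ?prodN ?prodZ /=; congr (_, _); pw.

Lemma JA x y a : JJ BR PH (x,0) (y,0) (0,a) =
  (rho' (phis a) (brg x y) - (brg (rho' a x) (phig y) + brg (phig x) (rho' a y)
      + rho' (rho y a) (phig x) - rho' (rho x a) (phig y)),
   rho (phig x) (rho y a) - rho (phig y) (rho x a) - rho (brg x y) (phis a)).
Proof. rewrite /JJ /BR /PH /=; simpl_all; rewrite /= (Hgsk (phig y)); fin. Qed.

Lemma JB a b x : JJ BR PH (0,a) (0,b) (x,0) =
  (rho' (phis a) (rho' b x) - rho' (phis b) (rho' a x) - rho' (brs a b) (phig x),
   rho (phig x) (brs a b) - (brs (rho x a) (phis b) + brs (phis a) (rho x b)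
      + rho (rho' b x) (phis a) - rho (rho' a x) (phis b))).
Proof. rewrite /JJ /BR /PH /=; simpl_all; rewrite /= (Hssk (phis b)); fin. Qed.

Lemma Jg x y z : JJ BR PH (x,0) (y,0) (z,0) = (JJ brg phig x y z, 0).
Proof. rewrite /JJ /BR /PH /=; simpl_all; fin. Qed.
Lemma Js a b c : JJ BR PH (0,a) (0,b) (0,c) = (0, JJ brs phis a b c).
Proof. rewrite /JJ /BR /PH /=; simpl_all; fin. Qed.

Lemma BR_lin1 v : lin (fun u => BR u v).
Proof. move=> c [x a] [y b]; case: v => z d; rewrite /BR prodZ prodD /=; simpl_all; fin. Qed.
Lemma BR_lin2 u : lin (BR u).
Proof. move=> c [x a] [y b]; case: u => z d; rewrite /BR prodZ prodD /=; simpl_all; fin. Qed.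
Lemma BR_skew u v : BR u v = - BR v u.
Proof. case: u => x a; case: v => y b; rewrite /BR /= (Hgsk y) (Hssk b); fin. Qed.
Lemma PH_lin : lin PH.
Proof. move=> c [x a] [y b]; rewrite /PH prodZ prodD /=; simpl_all; fin. Qed.
Lemma BR_gg x y : BR (x,0) (y,0) = (brg x y, 0).
Proof. rewrite /BR /=; simpl_all; fin. Qed.
Lemma BR_ss a b : BR (0,a) (0,b) = (0, brs a b).
Proof. rewrite /BR /=; simpl_all; fin. Qed.

Lemma BR_mult :
  (forall x y, phig (brg x y) = brg (phig x) (phig y)) ->
  (forall a b, phis (brs a b) = brs (phis a) (phis b)) ->
  (forall x a, rho (phig x) (phis a) = phis (rho x a)) ->
  (forall a x, rho' (phis a) (phig x) = phig (rho' a x)) ->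
  forall u v, PH (BR u v) = BR (PH u) (PH v).
Proof.
move=> m1 m2 e1 e2 [x a] [y b]; rewrite /PH /BR /=; simpl_all.
by rewrite m1 m2 !e1 !e2.
Qed.

Lemma BR_jacobi : (forall x y z, JJ brg phig x y z = 0) -> (forall a b c, JJ brs phis a b c = 0) ->
  (forall x y a, JJ BR PH (x,0) (y,0) (0,a) = 0) -> (forall a b x, JJ BR PH (0,a) (0,b) (x,0) = 0) ->
  forall u v w, JJ BR PH u v w = 0.
Proof.
move=> hg hs hA hB [x a] [y b] [z c].
have e : forall (p q : V), (p, q) = (p, 0) + (0, q) by move=> p q; rewrite prodD addr0 add0r.
have cA1 : forall x y a, JJ BR PH (x,0) (0,a) (y,0) = 0 by move=> *; rewrite JJcyc JJcyc hA.
have cA2 : forall x y a, JJ BR PH (0,a) (x,0) (y,0) = 0 by move=> *; rewrite JJcyc hA.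
have cB1 : forall x a b, JJ BR PH (0,a) (x,0) (0,b) = 0 by move=> *; rewrite JJcyc JJcyc hB.
have cB2 : forall x a b, JJ BR PH (x,0) (0,a) (0,b) = 0 by move=> *; rewrite JJcyc hB.
rewrite (e x a) (e y b) (e z c).
rewrite !(JJD1 BR_lin1 BR_lin2 PH_lin) !(JJD2 BR_lin1 BR_lin2 PH_lin) !(JJD3 BR_lin1 BR_lin2 PH_lin).
by rewrite Jg Js hg hs hA hB cA1 cA2 cB1 cB2 -prod0 !addr0.
Qed.
End Core.


Section Main.
Variables (K : fieldType) (n : nat).
Local Notation V := 'rV[K]_n.
Variables (brg brs : V -> V -> V) (phig phis : V -> V).
Hypothesis Hg : is_HomLie brg phig.
Hypothesis Hs : is_HomLie brs phis.
Hypothesis Wg : weakly_involutive brg phig.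
Hypothesis Ws : weakly_involutive brs phis.

Lemma gl y : lin (fun x => brg x y). Proof. by case: Hg. Qed.
Lemma gr x : lin (brg x). Proof. by case: Hg => _ []. Qed.
Lemma gsk x y : brg x y = - brg y x. Proof. by case: Hg => _ [_ []]. Qed.
Lemma gp : lin phig. Proof. by case: Hg => _ [_ [_ []]]. Qed.
Lemma gm x y : phig (brg x y) = brg (phig x) (phig y). Proof. by case: Hg => _ [_ [_ [_ []]]]. Qed.
Lemma gj x y z : brg (phig x) (brg y z) + brg (phig y) (brg z x) + brg (phig z) (brg x y) = 0.
Proof. by case: Hg => _ [_ [_ [_ []]]]. Qed.
Lemma sl y : lin (fun x => brs x y). Proof. by case: Hs. Qed.
Lemma sr x : lin (brs x). Proof. by case: Hs => _ []. Qed.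
Lemma ssk x y : brs x y = - brs y x. Proof. by case: Hs => _ [_ []]. Qed.
Lemma sp : lin phis. Proof. by case: Hs => _ [_ [_ []]]. Qed.
Lemma sm x y : phis (brs x y) = brs (phis x) (phis y). Proof. by case: Hs => _ [_ [_ [_ []]]]. Qed.
Lemma sj x y z : brs (phis x) (brs y z) + brs (phis y) (brs z x) + brs (phis z) (brs x y) = 0.
Proof. by case: Hs => _ [_ [_ [_ []]]]. Qed.

Local Notation ad := (ad_circ brg phig).
Local Notation fr := (frak_ad_circ brs phis).

Lemma pair_ad y x a : pair y (ad x a) = - pair (brg (phig x) y) a.
Proof.
have hf : forall c u v, (fun y => - pair (brg (phig x) y) a) (c *: u + v)
   = c * (fun y => - pair (brg (phig x) y) a) u + (fun y => - pair (brg (phig x) y) a) v.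
  by move=> c u v /=; rewrite (linD (gr _)) (linZ (gr _)) pairDl pairZl; ring.
exact: (key_lin hf y).
Qed.

Lemma pair_fr a x b : pair (fr a x) b = - pair x (brs (phis a) b).
Proof.
have hf : forall c u v, (fun b => - pair x (brs (phis a) b)) (c *: u + v)
   = c * (fun b => - pair x (brs (phis a) b)) u + (fun b => - pair x (brs (phis a) b)) v.
  by move=> c u v /=; rewrite (linD (sr _)) (linZ (sr _)) pairDr pairZr; ring.
rewrite pairC; exact: (key_lin hf b).
Qed.

Hypothesis Hadj : forall x a, pair x (phis a) = pair (phig x) a.

Lemma rep_ad : is_rep brg phig phis ad.
Proof.
split; first exact: sp.
split.
  move=> x c u v; apply/rowP => j; rewrite /ad_circ !mxE pairDr pairZr; ring.
split.
  move=> c x y w; apply/rowP => j; rewrite /ad_circ !mxE (linD gp) (linZ gp).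
  rewrite (linD (gl _)) (linZ (gl _)) pairDl pairZl; ring.
split.
  move=> x w; apply: pair_extr => y.
  rewrite pair_ad Wg !Hadj gm pair_ad //.
move=> x y w; apply: pair_extr => z.
rewrite pairDr pairNr !pair_ad !Wg Hadj gm Wg.
rewrite (gsk (brg x y)) (gsk x z) (linN (gr _)) !pairNl.
have := congr1 (fun v => pair v w) (gj x y z).
rewrite !pairDl pair0l => h.
apply: (comb1 (k := 1) h); ring.
Qed.

Lemma rep_fr : is_rep brs phis phig fr.
Proof.
split; first exact: gp.
split.
  move=> a c u v; apply/rowP => j; rewrite /frak_ad_circ !mxE pairDl pairZl; ring.
split.
  move=> c a b x; apply/rowP => j; rewrite /frak_ad_circ !mxE (linD sp) (linZ sp).
  rewrite (linD (sl _)) (linZ (sl _)) pairDr pairZr; ring.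
split.
  move=> a x; apply: pair_extl => b.
  rewrite pair_fr Ws -Hadj sm -Hadj pair_fr //.
move=> a b x; apply: pair_extl => c.
rewrite pairDl pairNl !pair_fr !Ws -Hadj sm Ws.
rewrite (ssk (brs a b)) (ssk a c) (linN (sr _)) !pairNr.
have := congr1 (fun v => pair x v) (sj a b c).
rewrite !pairDr pair0r => h.
apply: (comb1 (k := 1) h); ring.
Qed.

Lemma inv_BR : invariant_form (BR brg brs ad fr) (PH phig phis) (@Bform K n).
Proof.
split.
  move=> [x a] [y b] [z c]; rewrite /Bform /BR /PH /=.
  rewrite !pairDl !pairNl !pairDr !pairNr !pair_ad !pair_fr !Wg !Ws !Hadj gm Wg -(Hadj y) sm Ws.
  rewrite (gsk y x) (gsk z (phig x)) (ssk c (phis a)) (ssk b a) !pairNl !pairNr.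
  ring.
move=> [x a] [y b]; rewrite /Bform /PH /= !Hadj; ring.
Qed.
End Main.

Section Final.
Variables (K : fieldType) (n : nat).
Local Notation V := 'rV[K]_n.
Variables (brg brs : V -> V -> V) (phig phis : V -> V).
Hypothesis Hg : is_HomLie brg phig.
Hypothesis Hs : is_HomLie brs phis.
Hypothesis Wg : weakly_involutive brg phig.
Hypothesis Ws : weakly_involutive brs phis.
Local Notation ad := (ad_circ brg phig).
Local Notation fr := (frak_ad_circ brs phis).

Lemma converse_dir : (forall x a : V, pair x (phis a) = pair (phig x) a) ->
  matched_pair brg phig brs phis ad fr -> manin_triple_double brg phig brs phis.
Proof.
move=> Hadj [_ [_ [[_ [adr [adl [ade adc]]]] [[_ [frr [frl [fre frc]]]] [c1 c2]]]]].
have adl' : forall a, lin (fun x => ad x a) by move=> a c x y; exact: adl.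
have frl' : forall x, lin (fun a => fr a x) by move=> x c a b; exact: frl.
split; first by move=> u v; rewrite /Bform addrC.
split.
  move=> [x a] h; rewrite prod0; congr (_, _); apply/rowP => j.
    have := h (0, delta_mx 0 j); rewrite /Bform /= pair0l addr0 pairC pair_delta !mxE //.
  have := h (delta_mx 0 j, 0); rewrite /Bform /= pair0r add0r pair_delta !mxE //.
split; first by move=> x y; rewrite /Bform /= !pair0r addr0.
split; first by move=> a b; rewrite /Bform /= !pair0l addr0.
exists (BR brg brs ad fr), (PH phig phis).
split.
  split; first exact: (BR_lin1 (gl Hg) (sl Hs) adl' adr frl' frr).
  split; first exact: (BR_lin2 (gr Hg) (sr Hs) adl' adr frl' frr).
  split; first exact: (BR_skew _ _ (gsk Hg) (ssk Hs)).
  split; first exact: (PH_lin (gp Hg) (sp Hs)).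
  split; first exact: (BR_mult (gp Hg) (sp Hs) (gm Hg) (sm Hs) ade fre).
  move=> u v w.
  have := (BR_jacobi (gl Hg) (gr Hg) (sl Hs) (sr Hs) adl' adr frl' frr (gp Hg) (sp Hs)) .
  apply; [exact: (gj Hg) | exact: (sj Hs) | | ].
    move=> x y a.
    rewrite (JA (gl Hg) (gr Hg) (sl Hs) (sr Hs) adl' adr frl' frr (gp Hg) (sp Hs) (gsk Hg)).
    rewrite c1 adc !subrr; reflexivity.
  move=> a b x.
  rewrite (JB (gl Hg) (gr Hg) (sl Hs) (sr Hs) adl' adr frl' frr (gp Hg) (sp Hs) (ssk Hs)).
  rewrite c2 frc !subrr; reflexivity.
split; first by move=> x y; rewrite (BR_gg _ (sl Hs) adr frl').
split; first by move=> x; rewrite /PH /= (lin0 (sp Hs)).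
split; first by move=> a b; rewrite (BR_ss _ (gl Hg) adl' frr).
split; first by move=> a; rewrite /PH /= (lin0 (gp Hg)).
exact: inv_BR.
Qed.

Lemma forward_dir : manin_triple_double brg phig brs phis ->
  (forall x a : V, pair x (phis a) = pair (phig x) a) /\ matched_pair brg phig brs phis ad fr.
Proof.
case=> _ [_ [_ [_ [brk [phik [[l1 [l2 [sk [lp [mu ja]]]]] [rg [pg [rs [ps [inv1 inv2]]]]]]]]]]].
have Hadj : forall x a : V, pair x (phis a) = pair (phig x) a.
  move=> x a; have h := inv2 (x,0) (0,a); rewrite pg ps /Bform /= !pair0l !addr0 in h.
  by rewrite h.
have RA := rep_ad Hg Hs Wg Hadj; have RF := rep_fr Hg Hs Ws Hadj.
have [_ [adr [adl [ade adc]]]] := RA.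
have [_ [frr [frl [fre frc]]]] := RF.
have adl' : forall a, lin (fun x => ad x a) by move=> a c x y; exact: adl.
have frl' : forall x, lin (fun a => fr a x) by move=> x c a b; exact: frl.
have bD1 : forall u1 u2 v, brk (u1 + u2) v = brk u1 v + brk u2 v.
  by move=> u1 u2 v; exact (linD (l1 v) u1 u2).
have bD2 : forall u1 u2 v, brk v (u1 + u2) = brk v u1 + brk v u2.
  by move=> u1 u2 v; exact (linD (l2 v) u1 u2).
have e : forall p q : V, (p, q) = (p, 0) + (0, q) by move=> p q; rewrite prodD addr0 add0r.
have mix : forall x a, brk (x,0) (0,a) = (- fr a x, ad x a).
  move=> x a; apply: injective_projections => /=.
    apply: pair_extl => b.
    have h := inv1 (x,0) (0,a) (0,b); rewrite ps rs /Bform /= !pair0l !addr0 in h.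
    rewrite h pairNl (pair_fr Hs); ring.
  apply: pair_extr => y.
  have h := inv1 (0,a) (x,0) (y,0); rewrite pg rg /Bform /= !pair0l !pair0r !add0r in h.
  rewrite (sk (x,0) (0,a)); move: h; case: (brk (0,a) (x,0)) => p q /= h.
  rewrite pairNr h (pair_ad Hg); ring.
have brkE : forall u v, brk u v = BR brg brs ad fr u v.
  move=> [x a] [y b]; rewrite {1}(e x a) {1}(e y b) !bD1 !bD2 rg rs !mix (sk (0,a) (y,0)) mix.
  rewrite /BR /= ?prodD ?prodN /=; congr (_, _); apply/rowP => j; rewrite !mxE; ring.
have phikE : forall u, phik u = PH phig phis u.
  move=> [x a]; rewrite {1}(e x a) (linD lp) pg ps /PH /= prodD addr0 add0r //.
have JBR : forall u v w, JJ (BR brg brs ad fr) (PH phig phis) u v w = 0.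
  by move=> u v w; rewrite /JJ -!brkE -!phikE; exact: ja.
split; first exact: Hadj.
split; first exact: Hg.
split; first exact: Hs.
split; first exact: RA.
split; first exact: RF.
split.
  move=> x y a; have := JBR (x,0) (y,0) (0,a).
  rewrite (JA (gl Hg) (gr Hg) (sl Hs) (sr Hs) adl' adr frl' frr (gp Hg) (sp Hs) (gsk Hg)).
  move=> h; move: (congr1 fst h) => /= /eqP; rewrite subr_eq0 => /eqP //.
move=> x a b; have := JBR (0,a) (0,b) (x,0).
rewrite (JB (gl Hg) (gr Hg) (sl Hs) (sr Hs) adl' adr frl' frr (gp Hg) (sp Hs) (ssk Hs)).
move=> h; move: (congr1 snd h) => /= /eqP; rewrite subr_eq0 => /eqP //.
Qed.
End Final.

Unset Implicit Arguments.

Theorem proposition3p6 (K : fieldType) (n : nat)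
    (brg : 'rV[K]_n -> 'rV[K]_n -> 'rV[K]_n) (phig : 'rV[K]_n -> 'rV[K]_n)
    (brs : 'rV[K]_n -> 'rV[K]_n -> 'rV[K]_n) (phis : 'rV[K]_n -> 'rV[K]_n) :
  is_HomLie brg phig -> weakly_involutive brg phig ->
  is_HomLie brs phis -> weakly_involutive brs phis ->
  manin_triple_double brg phig brs phis <->
  ((forall x a : 'rV[K]_n, pair x (phis a) = pair (phig x) a) /\
   matched_pair brg phig brs phis (ad_circ brg phig) (frak_ad_circ brs phis)).
Proof.
move=> Hg Wg Hs Ws; split; first exact: forward_dir.
by case=> Hadj MP; exact: converse_dir.
Qed.
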